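(* Let $A = \langle Q, \delta, \gamma, F\rangle$ be a pomset automaton that is well-nested and finitely supported. Then for every state $q \in Q$ there exists a series-parallel rational expression $e_q$ such that $[\![ e_q ]\!] = L_A(q)$.
   Context: Fix a finite alphabet $\Sigma$. A pomset is an isomorphism class of labelled posets $\langle C, \leq, \lambda\rangle$ with $\lambda: C \to \Sigma$; $1$ is the empty pomset and $a\in\Sigma$ denotes the one-point pomset labelled $a$. For pomsets $U,V$ (with disjoint carriers) the sequential composition $U\cdot V$ has carrier $C_U\cup C_V$, order ${\leq_U}\cup{\leq_V}\cup(C_U\times C_V)$ and the union labelling; the parallel composition $U\parallel V$ is the same but with order ${\leq_U}\cup{\leq_V}$. The set $\mathsf{Pom}^{\mathsf{sp}}$ of series-parallel pomsets is the smallest set of pomsets containing $1$ and all $a\in\Sigma$ and closed under $\cdot$ and $\parallel$. For pomset languages, $\mathcal U\cdot\mathcal V=\{U\cdot V\}$, $\mathcal U\parallel\mathcal V=\{U\parallel V\}$, $\mathcal U^*=\bigcup_n\mathcal U^n$ and $\mathcal U^\dagger=\bigcup_n \mathcal U^{(n)}$, where $\mathcal U^0=\mathcal U^{(0)}=\{1\}$, $\mathcal U^{n+1}=\mathcal U\cdot\mathcal U^n$, $\mathcal U^{(n+1)}=\mathcal U\parallel\mathcal U^{(n)}$. Series-parallel rational expressions (spr-expressions) are given by $e,f ::= 0 \mid 1 \mid a\in\Sigma \mid e+f \mid e\cdot f \mid e\parallel f \mid e^* \mid e^\dagger$, with semantics $[\![0]\!]=\emptyset$, $[\![1]\!]=\{1\}$,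 $[\![a]\!]=\{a\}$, $[\![e+f]\!]=[\![e]\!]\cup[\![f]\!]$, $[\![e\cdot f]\!]=[\![e]\!]\cdot[\![f]\!]$, $[\![e\parallel f]\!]=[\![e]\!]\parallel[\![f]\!]$, $[\![e^*]\!]=[\![e]\!]^*$, $[\![e^\dagger]\!]=[\![e]\!]^\dagger$. A pomset automaton (PA) is $A=\langle Q,\delta,\gamma,F\rangle$ with $F\subseteq Q$ the accepting states, $\delta: Q\times\Sigma\to Q$ and $\gamma: Q\times Q\times Q\to Q$. Every PA is assumed to contain states $\bot\in Q\setminus F$ and $\top\in F$ with $\delta(\bot,a)=\delta(\top,a)=\bot$ and $\gamma(\bot,r,s)=\gamma(\top,r,s)=\bot$ for all $a,r,s$. The trace relation ${\to_A}\subseteq Q\times\mathsf{Pom}^{\mathsf{sp}}\times Q$ is the smallest relation with: $q\xrightarrow{1}_A q$; $q\xrightarrow{a}_A\delta(q,a)$; if $q\xrightarrow{U}_A q''$ and $q''\xrightarrow{V}_A q'$ then $q\xrightarrow{U\cdot V}_A q'$; if $r\xrightarrow{U}_A r'\in F$ and $s\xrightarrow{V}_A s'\in F$ then $q\xrightarrow{U\parallel V}_A\gamma(q,r,s)$. The language of $q$ is $L_A(q)=\{U : \exists q'\in F.\ q\xrightarrow{U}_A q'\}$. The trace dependency relation $\preceq_A$ is the smallest preorder on $Q$ such that $r,s\preceq_A q$ whenever $\gamma(q,r,s)\neq\bot$, $\delta(q,a)\preceq_A q$ for all $a$, and $\gamma(q,r,s)\preceq_A q$ for all $r,s$. Write $q\prec_A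 q'$ iff $q\preceq_A q'$ and $q'\not\preceq_A q$. The support $\pi_A(q)$ is the smallest $\preceq_A$-downward-closed subset of $Q$ containing $q$; $A$ is finitely supported if every $\pi_A(q)$ is finite. A state $q$ is sequential if $r,s\prec_A q$ whenever $\gamma(q,r,s)\neq\bot$. A state $q\in F$ is recursive if it is not sequential, $\delta(q,a)=\bot$ for all $a\in\Sigma$, and whenever $\gamma(q,r,s)\neq\bot$ we have $s=q$, $r\prec_A q$ and $\gamma(q,r,s)=\top$. $A$ is well-nested if every state is sequential or recursive. *)

(* Defs.v *)
From Stdlib Require List.
From mathcomp Require Import all_boot.
Set Implicit Arguments.
Unset Strict Implicit.
Unset Printing Implicit Defensive.

(* Pomsets are isomorphism classes of these; pomset languages are represented by
   predicates on representatives, and every construction below is closed under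
   isomorphism, so such predicates denote sets of isomorphism classes. *)
Record lposet (Sigma : Type) := LPoset {
  lp_size : nat;
  lp_ord : rel 'I_lp_size;
  lp_lab : 'I_lp_size -> Sigma }.

Section Pomsets.
Variable Sigma : Type.
Implicit Types U V W : lposet Sigma.

Definition is_poset U : Prop :=
  [/\ reflexive (@lp_ord _ U), antisymmetric (@lp_ord _ U) & transitive (@lp_ord _ U)].

Definition lp_iso U V : Prop :=
  exists f : 'I_(lp_size U) -> 'I_(lp_size V),
    [/\ bijective f,
        (forall i j, lp_ord i j = lp_ord (f i) (f j)) &
        (forall i, lp_lab i = lp_lab (f i))].

Definition I0_elim (T : Type) (i : 'I_0) : T.
Proof. by case: i. Defined.

Definition lp_unit : lposet Sigma :=
  @LPoset Sigma 0 (fun _ _ => true) (@I0_elim Sigma).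

Definition lp_atom (a : Sigma) : lposet Sigma :=
  @LPoset Sigma 1 (fun _ _ => true) (fun _ => a).

Definition lp_seq U V : lposet Sigma :=
  @LPoset Sigma (lp_size U + lp_size V)
    (fun i j => match split i, split j with
                | inl i', inl j' => lp_ord i' j'
                | inr i', inr j' => lp_ord i' j'
                | inl _, inr _ => true
                | inr _, inl _ => false
                end)
    (fun i => match split i with inl i' => lp_lab i' | inr i' => lp_lab i' end).

Definition lp_par U V : lposet Sigma :=
  @LPoset Sigma (lp_size U + lp_size V)
    (fun i j => match split i, split j with
                | inl i', inl j' => lp_ord i' j'
                | inr i', inr j' => lp_ord i' j'
                | _, _ => false
                end)
    (fun i => match split i with inl i' => lp_lab i' | inr i' => lp_lab i' end).

Definition lang := lposet Sigma -> Prop.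

Definition lang_unit : lang := fun U => lp_iso U lp_unit.
Definition lang_seq (L1 L2 : lang) : lang :=
  fun U => exists V W, [/\ L1 V, L2 W & lp_iso U (lp_seq V W)].
Definition lang_par (L1 L2 : lang) : lang :=
  fun U => exists V W, [/\ L1 V, L2 W & lp_iso U (lp_par V W)].

Fixpoint lang_seqpow (L : lang) (n : nat) : lang :=
  if n is n'.+1 then lang_seq L (lang_seqpow L n') else lang_unit.
Fixpoint lang_parpow (L : lang) (n : nat) : lang :=
  if n is n'.+1 then lang_par L (lang_parpow L n') else lang_unit.

Definition lang_star (L : lang) : lang := fun U => exists n, lang_seqpow L n U.
Definition lang_dagger (L : lang) : lang := fun U => exists n, lang_parpow L n U.

End Pomsets.

Inductive spr (Sigma : Type) :=
| sZero
| sOne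
| sAtom of Sigma
| sPlus of spr Sigma & spr Sigma
| sSeq of spr Sigma & spr Sigma
| sPar of spr Sigma & spr Sigma
| sStar of spr Sigma
| sDagger of spr Sigma.
Arguments sZero {Sigma}.
Arguments sOne {Sigma}.

Fixpoint spr_sem (Sigma : Type) (e : spr Sigma) : lang Sigma :=
  match e with
  | sZero => fun _ => False
  | sOne => @lang_unit Sigma
  | sAtom a => fun U => lp_iso U (lp_atom a)
  | sPlus e f => fun U => spr_sem e U \/ spr_sem f U
  | sSeq e f => lang_seq (spr_sem e) (spr_sem f)
  | sPar e f => lang_par (spr_sem e) (spr_sem f)
  | sStar e => lang_star (spr_sem e)
  | sDagger e => lang_dagger (spr_sem e)
  end.

Record PA (Sigma : finType) := MkPA {
  pa_state : Type;
  pa_delta : pa_state -> Sigma -> pa_state;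
  pa_gamma : pa_state -> pa_state -> pa_state -> pa_state;
  pa_final : pa_state -> Prop;
  pa_bot : pa_state;
  pa_top : pa_state;
  pa_bot_nfinal : ~ pa_final pa_bot;
  pa_top_final : pa_final pa_top;
  pa_delta_bot : forall a, pa_delta pa_bot a = pa_bot;
  pa_delta_top : forall a, pa_delta pa_top a = pa_bot;
  pa_gamma_bot : forall r s, pa_gamma pa_bot r s = pa_bot;
  pa_gamma_top : forall r s, pa_gamma pa_top r s = pa_bot }.

Section PAtheory.
Variables (Sigma : finType) (A : PA Sigma).
Local Notation Q := (pa_state A).
Local Notation delta := (@pa_delta _ A).
Local Notation gamma := (@pa_gamma _ A).
Local Notation F := (@pa_final _ A).
Local Notation bot := (pa_bot A).
Local Notation top := (pa_top A).

Inductive trace : Q -> lposet Sigma -> Q -> Prop :=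
| tr_unit q U : lp_iso U (lp_unit Sigma) -> trace q U q
| tr_atom q a U : lp_iso U (lp_atom a) -> trace q U (delta q a)
| tr_seq q q'' q' U V W :
    trace q V q'' -> trace q'' W q' -> lp_iso U (lp_seq V W) -> trace q U q'
| tr_par q r r' s s' U V W :
    trace r V r' -> F r' -> trace s W s' -> F s' ->
    lp_iso U (lp_par V W) -> trace q U (gamma q r s).

Definition pa_lang (q : Q) : lang Sigma :=
  fun U => exists q', F q' /\ trace q U q'.

(* trace dependency preorder: dep q' q  means  q' ≼_A q *)
Inductive dep : Q -> Q -> Prop :=
| dep_refl q : dep q q
| dep_trans q1 q2 q3 : dep q1 q2 -> dep q2 q3 -> dep q1 q3
| dep_left q r s : gamma q r s <> bot -> dep r q
| dep_right q r s : gamma q r s <> bot -> dep s q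
| dep_delta q a : dep (delta q a) q
| dep_gamma q r s : dep (gamma q r s) q.

Definition sdep (q q' : Q) : Prop := dep q q' /\ ~ dep q' q.

Definition down_closed (S : Q -> Prop) : Prop :=
  forall q q', S q -> dep q' q -> S q'.
Definition support (q : Q) : Q -> Prop :=
  fun q' => forall S, down_closed S -> S q -> S q'.

Definition finite_set (S : Q -> Prop) : Prop :=
  exists l : seq Q, forall x, S x -> List.In x l.

Definition finitely_supported : Prop := forall q, finite_set (support q).

Definition sequential (q : Q) : Prop :=
  forall r s, gamma q r s <> bot -> sdep r q /\ sdep s q.

Definition recursive (q : Q) : Prop :=
  [/\ F q, ~ sequential q, (forall a, delta q a = bot) &
      (forall r s, gamma q r s <> bot -> [/\ s = q, sdep r q & gamma q r s = top])].

Definition well_nested : Prop := forall q, sequential q \/ recursive q.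

End PAtheory.

(* Main.v *)
Require Import Defs.
From mathcomp Require Import all_boot.
From Stdlib Require Import Classical ClassicalEpsilon.
Set Implicit Arguments.
Unset Strict Implicit.
Unset Printing Implicit Defensive.

Section Iso.
Variable Sigma : Type.
Implicit Types U V W : lposet Sigma.

Lemma iso_refl U : lp_iso U U.
Proof. by exists id; split=> //; exists id. Qed.

Lemma iso_sym U V : lp_iso U V -> lp_iso V U.
Proof.
case=> f [[g fK gK] Hord Hlab]; exists g; split.
- by exists f.
- by move=> i j; rewrite Hord !gK.
- by move=> i; rewrite Hlab gK.
Qed.

Lemma iso_trans U V W : lp_iso U V -> lp_iso V W -> lp_iso U W.
Proof.
case=> f [[f' fK f'K] Hord Hlab]; case=> g [[g' gK g'K] Hord2 Hlab2].
exists (g \o f); split.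
- by exists (f' \o g') => x /=; rewrite ?fK ?gK ?g'K ?f'K.
- by move=> i j; rewrite Hord Hord2.
- by move=> i; rewrite Hlab Hlab2.
Qed.

Definition summap (m n m' n' : nat) (f : 'I_m -> 'I_m') (g : 'I_n -> 'I_n')
  (i : 'I_(m + n)) : 'I_(m' + n') :=
  unsplit (match split i with inl a => inl (f a) | inr b => inr (g b) end).

Lemma split_summap m n m' n' (f : 'I_m -> 'I_m') (g : 'I_n -> 'I_n') i :
  split (summap f g i) = match split i with inl a => inl (f a) | inr b => inr (g b) end.
Proof. by rewrite /summap unsplitK. Qed.

Lemma summap_bij m n m' n' (f : 'I_m -> 'I_m') (g : 'I_n -> 'I_n') :
  bijective f -> bijective g -> bijective (summap f g).
Proof.
case=> f' fK f'K; case=> g' gK g'K; exists (summap f' g') => i.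
- by rewrite /summap unsplitK; case E: (split i) => [a|b]; rewrite ?fK ?gK -E splitK.
- by rewrite /summap unsplitK; case E: (split i) => [a|b]; rewrite ?f'K ?g'K -E splitK.
Qed.

Lemma iso_seq U U' V V' : lp_iso U U' -> lp_iso V V' -> lp_iso (lp_seq U V) (lp_seq U' V').
Proof.
case=> f [fb Hf Hfl]; case=> g [gb Hg Hgl]; exists (summap f g); split.
- exact: summap_bij.
- move=> i j /=; rewrite !split_summap.
  by case: (split i) => a; case: (split j) => b.
- by move=> i /=; rewrite split_summap; case: (split i).
Qed.

Lemma iso_par U U' V V' : lp_iso U U' -> lp_iso V V' -> lp_iso (lp_par U V) (lp_par U' V').
Proof.
case=> f [fb Hf Hfl]; case=> g [gb Hg Hgl]; exists (summap f g); split.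
- exact: summap_bij.
- move=> i j /=; rewrite !split_summap.
  by case: (split i) => a; case: (split j) => b.
- by move=> i /=; rewrite split_summap; case: (split i).
Qed.


Lemma slK m n (u : 'I_m) : split (lshift n u) = inl u.
Proof. exact: (unsplitK (inl u)). Qed.
Lemma srK m n (u : 'I_n) : split (rshift m u) = inr u.
Proof. exact: (unsplitK (inr u)). Qed.

Definition fa (a b c : nat) (i : 'I_((a + b) + c)) : 'I_(a + (b + c)) :=
  match split i with
  | inl i1 => match split i1 with
              | inl u => unsplit (inl u)
              | inr v => unsplit (inr (unsplit (inl v))) end
  | inr w => unsplit (inr (unsplit (inr w))) end.

Definition ga (a b c : nat) (j : 'I_(a + (b + c))) : 'I_((a + b) + c) :=
  match split j with
  | inl u => unsplit (inl (unsplit (inl u)))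
  | inr j1 => match split j1 with
              | inl v => unsplit (inl (unsplit (inr v)))
              | inr w => unsplit (inr w) end end.

Lemma iso_assoc U V W : lp_iso (lp_seq (lp_seq U V) W) (lp_seq U (lp_seq V W)).
Proof.
exists (@fa _ _ _); split.
- exists (@ga _ _ _) => i.
  + rewrite /fa; case Ei: (split i) => [i1|w]; [case Ei1: (split i1) => [u|v]|];
    rewrite /ga !unsplitK ?unsplitK; rewrite -?Ei1 ?splitK -?Ei ?splitK //.
  + rewrite /ga; case Ei: (split i) => [u|i1]; [|case Ei1: (split i1) => [v|w]];
    rewrite /fa !unsplitK ?unsplitK; rewrite -?Ei1 ?splitK -?Ei ?splitK //.
- move=> i j; rewrite /fa /=.
  case Ei: (split i) => [i1|w]; [case Ei1: (split i1) => [u|v]|];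
  case Ej: (split j) => [j1|w']; try case Ej1: (split j1) => [u'|v'];
  rewrite /= ?slK ?srK /= ?Ei1 ?Ej1 ?slK ?srK //.
- move=> i; rewrite /fa /=.
  case Ei: (split i) => [i1|w]; [case Ei1: (split i1) => [u|v]|];
  rewrite /= ?slK ?srK /= ?Ei1 ?slK ?srK //.
Qed.

Lemma iso_unitl U : lp_iso (lp_seq (lp_unit Sigma) U) U.
Proof.
exists (fun i => match split i with inl a => I0_elim _ a | inr b => b end); split.
- exists (fun b => unsplit (inr b)) => i.
  + by case E: (split i) => [a|b]; [exact: I0_elim _ a|rewrite -E splitK].
  + by rewrite unsplitK.
- by move=> i j /=; case: (split i) => [[]|a]; case: (split j) => [[]|b].
- by move=> i /=; case: (split i) => [[]|a].
Qed.

Lemma iso_unitr U : lp_iso (lp_seq U (lp_unit Sigma)) U.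
Proof.
exists (fun i => match split i with inl a => a | inr b => I0_elim _ b end); split.
- exists (fun b => unsplit (inl b)) => i.
  + by case E: (split i) => [a|b]; [rewrite -E splitK|exact: I0_elim _ b].
  + by rewrite unsplitK.
- by move=> i j /=; case: (split i) => [a|[]]; case: (split j) => [b|[]].
- by move=> i /=; case: (split i) => [a|[]].
Qed.

End Iso.


Section Alg.
Variable Sigma : Type.
Implicit Types U V W : lposet Sigma.
Local Notation lang := (lang Sigma).

Definition eqL (L1 L2 : lang) := forall U, L1 U <-> L2 U.
Definition closedL (L : lang) := forall U V, lp_iso U V -> L V -> L U.
Definition expressible (L : lang) := exists e : spr Sigma, eqL (spr_sem e) L.
Definition lunion (L1 L2 : lang) : lang := fun U => L1 U \/ L2 U.

Lemma seq_closed L1 L2 : closedL (lang_seq L1 L2).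
Proof. move=> U V H [X [Y [h1 h2 h3]]]; exists X, Y; split=> //; exact: iso_trans h3. Qed.
Lemma par_closed L1 L2 : closedL (lang_par L1 L2).
Proof. move=> U V H [X [Y [h1 h2 h3]]]; exists X, Y; split=> //; exact: iso_trans h3. Qed.
Lemma unit_closed : closedL (@lang_unit Sigma).
Proof. move=> U V H h; exact: iso_trans h. Qed.
Lemma seqpow_closed L n : closedL (lang_seqpow L n).
Proof. case: n => [|n] /=; [exact: unit_closed|exact: seq_closed]. Qed.
Lemma parpow_closed L n : closedL (lang_parpow L n).
Proof. case: n => [|n] /=; [exact: unit_closed|exact: par_closed]. Qed.

Lemma sem_closed e : closedL (spr_sem e).
Proof.
elim: e => /=.
- by [].
- exact: unit_closed.
- move=> a U V H h; exact: iso_trans h.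
- move=> e1 IH1 e2 IH2 U V H [h|h]; [left; exact: IH1 h|right; exact: IH2 h].
- move=> *; exact: seq_closed.
- move=> *; exact: par_closed.
- move=> e1 IH U V H [n h]; exists n; exact: seqpow_closed h.
- move=> e1 IH U V H [n h]; exists n; exact: parpow_closed h.
Qed.

Lemma expr_closed L : expressible L -> closedL L.
Proof. case=> e He U V H /He h; apply/He; exact: sem_closed h. Qed.

Lemma expr_ext L L' : eqL L L' -> expressible L -> expressible L'.
Proof. move=> H [e He]; exists e => U; rewrite He; exact: H. Qed.

Lemma expr_union L1 L2 : expressible L1 -> expressible L2 -> expressible (lunion L1 L2).
Proof. move=> [e1 H1] [e2 H2]; exists (sPlus e1 e2) => U /=; have := H1 U; have := H2 U; rewrite /lunion; tauto. Qed.

Lemma expr_seq L1 L2 : expressible L1 -> expressible L2 -> expressible (lang_seq L1 L2).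
Proof.
move=> [e1 H1] [e2 H2]; exists (sSeq e1 e2) => U /=; split;
  case=> [X [Y [h1 h2 h3]]]; exists X, Y; split => //; by [apply/H1|apply/H2].
Qed.

Lemma expr_par L1 L2 : expressible L1 -> expressible L2 -> expressible (lang_par L1 L2).
Proof.
move=> [e1 H1] [e2 H2]; exists (sPar e1 e2) => U /=; split;
  case=> [X [Y [h1 h2 h3]]]; exists X, Y; split => //; by [apply/H1|apply/H2].
Qed.

Lemma seqpow_ext L L' n : eqL L L' -> eqL (lang_seqpow L n) (lang_seqpow L' n).
Proof.
move=> H; elim: n => [|n IH] //= U; split; case=> [X [Y [h1 h2 h3]]]; exists X, Y;
  split => //; by [apply/H|apply/IH].
Qed.
Lemma parpow_ext L L' n : eqL L L' -> eqL (lang_parpow L n) (lang_parpow L' n).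
Proof.
move=> H; elim: n => [|n IH] //= U; split; case=> [X [Y [h1 h2 h3]]]; exists X, Y;
  split => //; by [apply/H|apply/IH].
Qed.

Lemma expr_star L : expressible L -> expressible (lang_star L).
Proof.
move=> [e H]; exists (sStar e) => U /=; split; case=> n h; exists n;
  by apply/(seqpow_ext n H).
Qed.
Lemma expr_dagger L : expressible L -> expressible (lang_dagger L).
Proof.
move=> [e H]; exists (sDagger e) => U /=; split; case=> n h; exists n;
  by apply/(parpow_ext n H).
Qed.

Lemma expr_unit : expressible (@lang_unit Sigma).
Proof. by exists sOne. Qed.
Lemma expr_zero : expressible (fun _ => False).
Proof. by exists sZero. Qed.
Lemma expr_atom a : expressible (fun U => lp_iso U (lp_atom a)).
Proof. by exists (sAtom a). Qed.

Lemma expr_bunion n (L : nat -> lang) :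
  (forall y, y < n -> expressible (L y)) ->
  expressible (fun U => exists y, y < n /\ L y U).
Proof.
elim: n => [|n IH] H.
  by apply: expr_ext expr_zero => U; split => // [[y []]].
have := expr_union (IH (fun y hy => H y (ltnW hy))) (H n (ltnSn n)).
apply: expr_ext => U; split.
- case=> [[y [hy h]]|h]; [exists y; split=> //; exact: ltnW|by exists n].
- case=> y [hy h]; rewrite ltnS leq_eqVlt in hy; case/orP: hy => [/eqP Ey|hy];
  [by subst; right|left; by exists y].
Qed.

Lemma expr_lunion (T : Type) (xs : seq T) (P : T -> Prop) (L : T -> lang) :
  (forall x, List.In x xs -> P x -> expressible (L x)) ->
  expressible (fun U => exists x, List.In x xs /\ P x /\ L x U).
Proof.
elim: xs => [|x xs IH] H.
  by apply: expr_ext expr_zero => U; split => // [[y []]].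
have H' : expressible (fun U => exists y, List.In y xs /\ P y /\ L y U).
  by apply: IH => y hy; apply: H; right.
case: (classic (P x)) => Px.
- have := expr_union H' (H x (or_introl erefl) Px); apply: expr_ext => U; split.
  + case=> [[y [hy h]]|h]; [exists y; split=> //; by right|exists x; by split; [left|]].
  + case=> y [[<-|hy] [hP h]]; [by right|left; by exists y].
- apply: expr_ext H' => U; split.
  + case=> y [hy h]; exists y; split=> //; by right.
  + case=> y [[<-|hy] [hP h]] //; by exists y.
Qed.

End Alg.


Section Kleene.
Variable Sigma : Type.
Implicit Types U V W : lposet Sigma.
Local Notation lang := (lang Sigma).

Inductive run (n : nat) (lab : nat -> nat -> lang) (out : nat -> lang) : nat -> lang :=
| run_out x U : out x U -> run n lab out x U
| run_step x y V W U : y < n -> lab x y V -> run n lab out y W ->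
    lp_iso U (lp_seq V W) -> run n lab out x U.

Lemma run_closed n lab out x :
  (forall x, closedL (out x)) -> closedL (run n lab out x).
Proof.
move=> Hc U U' H h; destruct h as [x' ? h|x' y V W ? hy hl hr hi].
- apply: run_out; exact: Hc h.
- apply: (run_step hy hl hr); exact: iso_trans hi.
Qed.

Definition lab' n (lab : nat -> nat -> lang) x y : lang :=
  lunion (lab x y) (lang_seq (lab x n) (lang_seq (lang_star (lab n n)) (lab n y))).
Definition out' n (lab : nat -> nat -> lang) (out : nat -> lang) x : lang :=
  lunion (out x) (lang_seq (lab x n) (lang_seq (lang_star (lab n n)) (out n))).
Definition Gl n lab out : lang :=
  lang_seq (lang_star (lab n n))
    (lunion (out n) (fun U => exists y, y < n /\
       lang_seq (lab n y) (run n (lab' n lab) (out' n lab out) y) U)).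

Lemma out'_closed n lab out : (forall x, closedL (out x)) -> forall x, closedL (out' n lab out x).
Proof.
move=> Hc x U V H [h|h]; [left; exact: Hc h|right; exact: seq_closed h].
Qed.

Lemma unit_in_star (L : lang) : lang_star L (lp_unit Sigma).
Proof. exists 0; exact: iso_refl. Qed.

Lemma iso_seq_l U U' V : lp_iso U U' -> lp_iso (lp_seq U V) (lp_seq U' V).
Proof. move=> h; apply: iso_seq h (iso_refl V). Qed.
Lemma iso_seq_r U V V' : lp_iso V V' -> lp_iso (lp_seq U V) (lp_seq U V').
Proof. move=> h; apply: iso_seq (iso_refl U) h. Qed.

Lemma elim1 n lab out x U : (forall x, closedL (out x)) ->
  run n.+1 lab out x U ->
  (x <> n -> run n (lab' n lab) (out' n lab out) x U) /\ (x = n -> Gl n lab out U).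
Proof.
move=> Hc; have Hc' := out'_closed (n:=n) (lab:=lab) Hc.
elim=> {x U} [x U h|x y V W U hy hl hr [IH1 IH2] hi].
- split=> [hx|Ex]; first by apply: run_out; left.
  subst x.
  exists (lp_unit Sigma), U; split; [exact: unit_in_star|by left|].
  apply: iso_sym; exact: iso_unitl.
- case: (eqVneq y n) => [Ey|Ny].
  + subst y; have [W1 [W2 [[k hk] hW2 hW]]] := IH2 erefl.
    split=> [hx|Ex].
    * case: hW2 => [ho|[z [hz [W3 [W4 [h3 h4 hW']]]]]].
      - apply: run_out; right; exists V, W; split=> //; exists W1, W2; split=> //.
        by exists k.
      - apply: (run_step (V := lp_seq V (lp_seq W1 W3)) (W := W4) hz).
        + right; exists V, (lp_seq W1 W3); split=> //; last exact: iso_refl.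
          exists W1, W3; split=> //; last exact: iso_refl.
          by exists k.
        + exact: h4.
        + apply: iso_trans hi _; apply: iso_trans (iso_seq_r _ hW) _.
          apply: iso_trans (iso_seq_r _ (iso_seq_r _ hW')) _.
          apply: iso_trans (iso_seq_r _ (iso_sym (iso_assoc _ _ _))) _.
          exact: iso_sym (iso_assoc _ _ _).
    * subst x; exists (lp_seq V W1), W2; split=> //.
      - exists k.+1; exists V, W1; split=> //; exact: iso_refl.
      - apply: iso_trans hi _; apply: iso_trans (iso_seq_r _ hW) _.
        exact: iso_sym (iso_assoc _ _ _).
  + have hy' : y < n by rewrite ltnS leq_eqVlt (negPf Ny) in hy.
    have IH := IH1 (elimN eqP Ny).
    split=> [hx|Ex].
    * apply: (run_step hy' _ IH hi); by left.
    * subst x; exists (lp_unit Sigma), U; split; [exact: unit_in_star| |].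
      - right; exists y; split=> //; exists V, W; split=> //.
      - apply: iso_sym; exact: iso_unitl.
Qed.

Lemma star_run n lab out (L := run n.+1 lab out n) k W1 W2 U :
  (forall x, closedL (out x)) ->
  lang_seqpow (lab n n) k W1 -> L W2 -> lp_iso U (lp_seq W1 W2) -> L U.
Proof.
move=> Hc; elim: k W1 W2 U => [|k IH] W1 W2 U /= h1 h2 hi.
- apply: (run_closed Hc) h2; apply: iso_trans hi _.
  apply: iso_trans (iso_seq_l _ h1) _; exact: iso_unitl.
- case: h1 => [a [W1' [ha hW1' hW1]]].
  apply: (run_step (V := a) (W := lp_seq W1' W2) (ltnSn n) ha).
  + by apply: (IH W1' W2) => //; exact: iso_refl.
  + apply: iso_trans hi _; apply: iso_trans (iso_seq_l _ hW1) _.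
    exact: iso_assoc.
Qed.

Lemma elim2 n lab out x U : (forall x, closedL (out x)) ->
  run n (lab' n lab) (out' n lab out) x U -> run n.+1 lab out x U.
Proof.
move=> Hc; elim=> {x U} [x U [h|h]|x y V W U hy [hl|hl] hr IH hi].
- exact: run_out.
- case: h => [V [W [hV [W1 [W2 [[k hk] hW2 hW]] hU]]]].
  apply: (run_step (ltnSn n) hV _ hU).
  apply: (star_run Hc hk _ hW); exact: run_out.
- apply: (run_step _ hl IH hi); exact: ltnW.
- case: hl => [V1 [V' [h1 [V2 [V3 [[k hk] h3 hV']] hV]]]].
  apply: (run_step (V := V1) (W := lp_seq V2 (lp_seq V3 W)) (ltnSn n) h1).
  + apply: (star_run Hc hk _ (iso_refl _)).
    apply: (run_step (V := V3) (W := W) _ h3 IH (iso_refl _)); exact: ltnW.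
  + apply: iso_trans hi _; apply: iso_trans (iso_seq_l _ hV) _.
    apply: iso_trans (iso_assoc _ _ _) _; apply: iso_seq_r.
    apply: iso_trans (iso_seq_l _ hV') _; exact: iso_assoc.
Qed.

Lemma elim3 n lab out U : (forall x, closedL (out x)) ->
  Gl n lab out U -> run n.+1 lab out n U.
Proof.
move=> Hc [W1 [W2 [[k hk] hW2 hW]]].
apply: (star_run Hc hk _ hW); case: hW2 => [h|[z [hz [W3 [W4 [h3 h4 hi]]]]]].
- exact: run_out.
- apply: (run_step _ h3 (elim2 Hc h4) hi); exact: ltnW.
Qed.

Theorem kleene n : forall lab out,
  (forall x y, expressible (lab x y)) -> (forall x, expressible (out x)) ->
  forall x, expressible (run n lab out x).
Proof.
elim: n => [|n IH] lab out Hl Ho x.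
- apply: expr_ext (Ho x) => U; split; first exact: run_out.
  by case.
- have Hc : forall x, closedL (out x) by move=> y; exact: expr_closed.
  have Hl' : forall x y, expressible (lab' n lab x y).
    move=> y z; apply: expr_union => //; apply: expr_seq => //.
    apply: expr_seq => //; exact: expr_star.
  have Ho' : forall x, expressible (out' n lab out x).
    move=> y; apply: expr_union => //; apply: expr_seq => //.
    apply: expr_seq => //; exact: expr_star.
  have IH' := IH _ _ Hl' Ho'.
  case: (eqVneq x n) => [->|Nx].
  + have : expressible (Gl n lab out).
      apply: expr_seq; first exact: expr_star.
      apply: expr_union => //; apply: expr_bunion => y _; exact: expr_seq.
    apply: expr_ext => U; split; first exact: elim3.
    by move=> h; case: (elim1 Hc h) => _; apply.
  + apply: expr_ext (IH' x) => U; split; first exact: elim2.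
    by move=> h; case: (elim1 Hc h) => + _; apply; apply/eqP.
Qed.

End Kleene.


Section Auto.
Variables (Sigma : finType) (A : PA Sigma).
Local Notation Q := (pa_state A).
Local Notation delta := (@pa_delta _ A).
Local Notation gamma := (@pa_gamma _ A).
Local Notation F := (@pa_final _ A).
Local Notation bot := (pa_bot A).
Local Notation top := (pa_top A).
Local Notation L := (@pa_lang _ A).
Implicit Types U V W : lposet Sigma.

Lemma top_neq_bot : top <> bot.
Proof. move=> E; apply: (pa_bot_nfinal (p:=A)); rewrite -E; exact: pa_top_final. Qed.

Lemma dep_bot (y z : Q) : dep y z -> z = bot -> y = bot.
Proof.
elim=> {y z} //.
- by move=> q1 q2 q3 _ IH1 _ IH2 /IH2 /IH1.
- by move=> q r s H E; rewrite E pa_gamma_bot in H.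
- by move=> q r s H E; rewrite E pa_gamma_bot in H.
- by move=> q a ->; rewrite pa_delta_bot.
- by move=> q r s ->; rewrite pa_gamma_bot.
Qed.

Lemma dep_top (y z : Q) : dep y z -> z = top \/ z = bot -> y = top \/ y = bot.
Proof.
elim=> {y z} //.
- by move=> q1 q2 q3 _ IH1 _ IH2 /IH2 /IH1.
- by move=> q r s H [E|E]; rewrite E ?pa_gamma_bot ?pa_gamma_top in H.
- by move=> q r s H [E|E]; rewrite E ?pa_gamma_bot ?pa_gamma_top in H.
- by move=> q a [->|->]; rewrite ?pa_delta_bot ?pa_delta_top; right.
- by move=> q r s [->|->]; rewrite ?pa_gamma_bot ?pa_gamma_top; right.
Qed.

Lemma trace_bot (x y : Q) U : trace x U y -> x = bot -> y = bot.
Proof.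
elim=> {x U y} //.
- by move=> q a U _ ->; rewrite pa_delta_bot.
- by move=> q q'' q' U V W _ IH1 _ IH2 _ /IH1 /IH2.
- by move=> q r r' s s' U V W _ _ _ _ _ _ _ ->; rewrite pa_gamma_bot.
Qed.

Lemma L_bot U : ~ L bot U.
Proof. case=> q0 [Fq h]; have E := trace_bot h erefl; rewrite E in Fq; exact: (@pa_bot_nfinal _ A). Qed.

Lemma trace_closed (x y : Q) U U' : lp_iso U' U -> trace x U y -> trace x U' y.
Proof.
move=> H h; destruct h.
- apply: tr_unit; exact: iso_trans H _.
- apply: tr_atom; exact: iso_trans H _.
- apply: tr_seq h1 h2 _; exact: iso_trans H _.
- apply: tr_par h1 _ h2 _ _ => //; exact: iso_trans H _.
Qed.

Lemma L_closed (x : Q) : closedL (L x).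
Proof. move=> U V H [q' [Fq h]]; exists q'; split=> //; exact: trace_closed h. Qed.

Lemma down_rec (x y : Q) : recursive x -> dep y x ->
  [\/ y = x, y = top, y = bot | exists r, sdep r x /\ dep y r].
Proof.
case=> Fx Nx Hd Hg.
suff H : forall y z, dep y z ->
  [\/ z = x, z = top, z = bot | exists r, sdep r x /\ dep z r] ->
  [\/ y = x, y = top, y = bot | exists r, sdep r x /\ dep y r] by move/H; apply; apply: Or41.
move=> {}y z; elim=> {y z} //.
- by move=> q1 q2 q3 _ IH1 _ IH2 /IH2 /IH1.
- move=> q r s H [E|E|E|[r0 [h1 h2]]]; try subst q.
  + by have [_ h _] := Hg _ _ H; apply: Or44; exists r; split=> //; exact: dep_refl.
  + by rewrite pa_gamma_top in H.
  + by rewrite pa_gamma_bot in H.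
  + apply: Or44; exists r0; split=> //; apply: dep_trans h2; exact: dep_left H.
- move=> q r s H [E|E|E|[r0 [h1 h2]]]; try subst q.
  + by have [-> _ _] := Hg _ _ H; apply: Or41.
  + by rewrite pa_gamma_top in H.
  + by rewrite pa_gamma_bot in H.
  + apply: Or44; exists r0; split=> //; apply: dep_trans h2; exact: dep_right H.
- move=> q a [E|E|E|[r0 [h1 h2]]]; try subst q.
  + by rewrite Hd; apply: Or43.
  + by rewrite pa_delta_top; apply: Or43.
  + by rewrite pa_delta_bot; apply: Or43.
  + apply: Or44; exists r0; split=> //; apply: dep_trans h2; exact: dep_delta.
- move=> q r s [E|E|E|[r0 [h1 h2]]]; try subst q.
  + case: (classic (gamma x r s = bot)) => E; first by apply: Or43.
    by have [_ _ ->] := Hg _ _ E; apply: Or42.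
  + by rewrite pa_gamma_top; apply: Or43.
  + by rewrite pa_gamma_bot; apply: Or43.
  + apply: Or44; exists r0; split=> //; apply: dep_trans h2; exact: dep_gamma.
Qed.



Lemma rec_case (p : Q) (l0 : seq Q) : recursive p ->
  (forall r, dep r p -> List.In r l0) ->
  (forall r, sdep r p -> expressible (L r)) -> expressible (L p).
Proof.
move=> Rp Hin IH; have [Fp Np Hd Hg] := Rp.
pose D : lang Sigma := fun U => exists r, List.In r l0 /\ gamma p r p <> bot /\ L r U.
have ED : expressible D.
  apply: expr_lunion => r _ H; apply: IH; by have [_ ? _] := Hg _ _ H.
have Ptop : p <> top.
  move=> E; apply: Np => r s; by rewrite E pa_gamma_top.
have Pbot : p <> bot by move=> E; apply: (@pa_bot_nfinal _ A); rewrite -E.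
apply: expr_ext (expr_dagger ED) => U; split.
- case=> n; elim: n U => [|n IHn] U /=.
  + by move=> h; exists p; split=> //; apply: tr_unit.
  + case=> V [W [[r [_ [Hr [r' [Fr' hr]]]]] hW hU]].
    have [s' [Fs' hs]] := IHn _ hW.
    exists (gamma p r p); split; last exact: tr_par hr Fr' hs Fs' hU.
    by have [_ _ ->] := Hg _ _ Hr; exact: pa_top_final.
- suff H : forall x U y, trace x U y ->
    [/\ x = bot -> y = bot,
        x = top -> y = bot \/ (y = top /\ lang_unit U) &
        x = p -> [\/ y = bot, y = p /\ lang_unit U |
                     y = top /\ exists n, lang_parpow D n.+1 U]].
    case=> q' [Fq h]; have [_ _ /(_ erefl)] := H _ _ _ h.
    case=> [E|[_ hU]|[_ [n hU]]].
    + by rewrite E in Fq; case: (@pa_bot_nfinal _ A).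
    + by exists 0.
    + by exists n.+1.
  move=> x {}U y; elim=> {x U y}.
  + move=> q U hU; split=> E; [by []|right|apply: Or32]; by split.
  + move=> q a U hU; split=> ->; rewrite ?pa_delta_bot ?pa_delta_top ?Hd //.
    * by left.
    * by apply: Or31.
  + move=> q q'' q' U V W _ [B1 T1 P1] _ [B2 T2 P2] hU; split.
    * by move/B1/B2.
    * move/T1 => [/B2 ->|[E hV]]; first by left.
      case: (T2 E) => [->|[-> hW]]; first by left.
      right; split=> //; apply: iso_trans hU _; apply: iso_trans (iso_seq hV hW) _.
      exact: iso_unitl.
    * move/P1 => [/B2 ->|[E hV]|[E [n hV]]]; first by apply: Or31.
      - have hU' : lp_iso U W.
          apply: iso_trans hU _; apply: iso_trans (iso_seq_l _ hV) _; exact: iso_unitl.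
        case: (P2 E) => [->|[-> hW]|[-> [m hW]]].
        + by apply: Or31.
        + apply: Or32; split=> //; exact: iso_trans hU' hW.
        + apply: Or33; split=> //; exists m; exact: parpow_closed hU' hW.
      - case: (T2 E) => [->|[-> hW]]; first by apply: Or31.
        apply: Or33; split=> //; exists n; apply: parpow_closed hV.
        apply: iso_trans hU _; apply: iso_trans (iso_seq_r _ hW) _; exact: iso_unitr.
  + move=> q r r' s s' U V W hr _ Fr' hs [_ _ Ps] Fs' hU; split=> E; subst q.
    * by rewrite pa_gamma_bot.
    * by rewrite pa_gamma_top; left.
    * case: (classic (gamma p r s = bot)) => Hb; first by apply: Or31.
      have [Es hs' ->] := Hg _ _ Hb; subst s.
      apply: Or33; split=> //.
      have DV : D V.
        exists r; split; [apply: Hin; exact: hs'.1|split=> //]; by exists r'.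
      case: (Ps erefl) => [Eb|[_ hW]|[_ [m hW]]].
      - by rewrite Eb in Fs'; case: (@pa_bot_nfinal _ A).
      - exists 0; exists V, W; split=> //.
      - exists m.+1; exists V, W; split=> //.
Qed.



Lemma In_nth_ex (T : Type) (s : seq T) (x d : T) :
  List.In x s -> exists i, i < size s /\ nth d s i = x.
Proof.
elim: s => [|y s IH] //= [->|/IH [i [hi hx]]]; first by exists 0.
by exists i.+1.
Qed.

Lemma In_mem (T : eqType) (s : seq T) (x : T) : x \in s -> List.In x s.
Proof.
elim: s => [|y s IH] //=; rewrite in_cons => /orP [/eqP ->|/IH]; by [left|right].
Qed.

Lemma seq_L (x y : Q) V W U : trace x V y -> L y W -> lp_iso U (lp_seq V W) -> L x U.
Proof. move=> h [q' [Fq h']] hU; exists q'; split=> //; exact: tr_seq h h' hU. Qed.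

Section SeqCase.
Variables (p : Q) (l0 : seq Q).
Hypothesis WN : well_nested A.
Hypothesis Sp : sequential p.
Hypothesis Pbot : p <> bot.
Hypothesis Hin : forall r, dep r p -> List.In r l0.
Hypothesis IH : forall r, sdep r p -> expressible (L r).

Definition Cs (x : Q) := dep x p /\ dep p x.

Lemma C_seq x : Cs x -> sequential x.
Proof.
move=> [h1 h2]; case: (WN x) => // Rx.
case: (down_rec Rx h2) => [E|E|E|[r [[hr1 hr2] hr]]].
- by subst x; case: Rx.
- rewrite E in h1; case: (dep_top h1 (or_introl erefl)) => {}E.
  + by subst x; move=> r s; rewrite pa_gamma_top.
  + by subst x; case: Rx => Fb _ _ _; case: (@pa_bot_nfinal _ A).
- by [].
- by case: hr2; apply: dep_trans hr; exact: h1.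
Qed.

Lemma C_sdep x r s : Cs x -> gamma x r s <> bot -> sdep r p /\ sdep s p.
Proof.
move=> Cx H; have [[hr1 hr2] [hs1 hs2]] := C_seq Cx H; case: Cx => h1 h2.
split; split; try exact: dep_trans h1.
- by move=> h; apply: hr2; exact: dep_trans h.
- by move=> h; apply: hs2; exact: dep_trans h.
Qed.

Lemma bot_nC : ~ Cs bot.
Proof. by case=> _ /dep_bot /(_ erefl). Qed.

Definition stepL (x y : Q) : lang Sigma := fun U =>
  (exists a, delta x a = y /\ lp_iso U (lp_atom a)) \/
  (exists r s, gamma x r s = y /\ lang_par (L r) (L s) U).

Lemma stepL_trace x y V : stepL x y V -> trace x V y.
Proof.
case=> [[a [<- h]]|[r [s [<- [V1 [V2 [[r' [F1 h1]] [s' [F2 h2]] h]]]]]]].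
- exact: tr_atom.
- exact: tr_par h1 F1 h2 F2 h.
Qed.

Lemma stepL_dep x y V : stepL x y V -> dep y x.
Proof.
case=> [[a [<- h]]|[r [s [<- _]]]]; [exact: dep_delta|exact: dep_gamma].
Qed.

Lemma stepL_expr x y : Cs x -> y <> bot -> expressible (stepL x y).
Proof.
move=> Cx Hy.
have E1 : expressible (fun U => exists a, List.In a (enum Sigma) /\ delta x a = y /\
                                   lp_iso U (lp_atom a)).
  apply: expr_lunion => a _ _; exact: expr_atom.
have E2 : expressible (fun U => exists r, List.In r l0 /\ (exists s, gamma x r s = y) /\
             (fun U => exists s, List.In s l0 /\ gamma x r s = y /\
                          lang_par (L r) (L s) U) U).
  apply: expr_lunion => r _ [s0 Hs0].
  apply: expr_lunion => s _ Hs.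
  have Hb : gamma x r s <> bot by rewrite Hs.
  have [h1 h2] := C_sdep Cx Hb.
  apply: expr_par; exact: IH.
apply: expr_ext (expr_union E1 E2) => U; split.
- case=> [[a [_ h]]|[r [_ [_ [s [_ h]]]]]]; [left|right]; first by exists a.
  by exists r, s.
- case=> [[a h]|[r [s [Hs h]]]]; [left|right].
  + exists a; split=> //; apply: In_mem; exact: mem_enum.
  + have Hb : gamma x r s <> bot by rewrite Hs.
    have [[h1 _] [h2 _]] := C_sdep Cx Hb.
    exists r; split; first exact: Hin.
    split; first by exists s.
    exists s; split=> //; exact: Hin.
Qed.

Local Notation n := (size l0).
Local Notation c i := (nth p l0 i).

Definition labS (i j : nat) : lang Sigma := fun U =>
  Cs (c i) /\ Cs (c j) /\ stepL (c i) (c j) U.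
Definition outS (i : nat) : lang Sigma := fun U =>
  Cs (c i) /\ ((F (c i) /\ lang_unit U) \/
    exists y, List.In y l0 /\ (sdep y p /\ y <> bot) /\ lang_seq (stepL (c i) y) (L y) U).

Lemma labS_expr i j : expressible (labS i j).
Proof.
case: (classic (Cs (c i) /\ Cs (c j))) => [[h1 h2]|H].
- have Hb : c j <> bot by move=> E; apply: bot_nC; rewrite -E.
  apply: expr_ext (stepL_expr h1 Hb) => U.
  by split=> [h|[_ [_ h]]].
- by apply: (expr_ext _ (expr_zero _)) => U; split=> // [[h1 [h2 _]]]; apply: H.
Qed.

Lemma outS_expr i : expressible (outS i).
Proof.
case: (classic (Cs (c i))) => [h1|H]; last first.
  by apply: (expr_ext _ (expr_zero _)) => U; split=> // [[h1 _]]; apply: H.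
have E1 : expressible (fun U => F (c i) /\ lang_unit U).
  case: (classic (F (c i))) => hF.
  - by apply: (expr_ext _ (expr_unit _)) => U; split=> // [[]].
  - by apply: (expr_ext _ (expr_zero _)) => U; split=> // [[]].
have E2 : expressible (fun U => exists y, List.In y l0 /\ (sdep y p /\ y <> bot) /\
            lang_seq (stepL (c i) y) (L y) U).
  apply: expr_lunion => y _ [hy1 hy2]; apply: expr_seq; last exact: IH.
  exact: stepL_expr.
apply: expr_ext (expr_union E1 E2) => U; split; first by move=> h.
by case.
Qed.

Lemma outS_closed i : closedL (outS i).
Proof. exact: expr_closed (outS_expr i). Qed.

Lemma run_sound i U : run n labS outS i U -> L (c i) U.
Proof.
elim=> {i U} [i U [_ [[hF hU]|[y [_ [_ [V [W [hV hW hU]]]]]]]]|i j V W U _ [_ [_ hl]] _ IHr hU].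
- by exists (c i); split=> //; exact: tr_unit.
- exact: seq_L (stepL_trace hV) hW hU.
- exact: seq_L (stepL_trace hl) IHr hU.
Qed.

Definition Good (x : Q) (U : lposet Sigma) :=
  (Cs x -> forall i, i < n -> c i = x -> run n labS outS i U) /\ (~ Cs x -> L x U).

Lemma Good_L x U : Good x U -> L x U.
Proof.
case=> h1 h2; case: (classic (Cs x)) => Cx; last exact: h2.
have [i [hi Ei]] := In_nth_ex p (Hin Cx.1).
rewrite -Ei; apply: run_sound; exact: h1.
Qed.

Lemma Good_closed x : closedL (Good x).
Proof.
move=> U V H [h1 h2]; split.
- move=> Cx i hi Ei; apply: (run_closed outS_closed) H _; exact: h1.
- move=> Cx; apply: L_closed H _; exact: h2.
Qed.

Lemma step_good x z V W U : stepL x z V -> Good z W -> lp_iso U (lp_seq V W) -> Good x U.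
Proof.
move=> hs hg hU; split; last first.
  move=> _; exact: seq_L (stepL_trace hs) (Good_L hg) hU.
move=> Cx i hi Ei; case: (classic (Cs z)) => Cz.
- have [j [hj Ej]] := In_nth_ex p (Hin Cz.1).
  apply: (run_step (V := V) (W := W) hj _ _ hU).
  + by rewrite /labS Ei Ej.
  + exact: hg.1.
- have Zb : z <> bot by move=> E; subst z; exact: L_bot (Good_L hg).
  have Dz : dep z p by apply: dep_trans (stepL_dep hs) Cx.1.
  apply: run_out; split; first by rewrite Ei.
  right; exists z; split; first exact: Hin.
  split; first by split; [split=> [|h]; [exact: Dz|apply: Cz]|].
  exists V, W; split=> //; [by rewrite Ei|exact: Good_L].
Qed.

Lemma trace_good x U y : trace x U y ->
  forall W U', Good y W -> lp_iso U' (lp_seq U W) -> Good x U'.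
Proof.
elim=> {x U y}.
- move=> q U hU W U' hg hU'; apply: Good_closed hg.
  apply: iso_trans hU' _; apply: iso_trans (iso_seq_l _ hU) _; exact: iso_unitl.
- move=> q a U hU W U' hg hU'; apply: step_good hg hU'; left; by exists a.
- move=> q q'' q' U V W0 _ IH1 _ IH2 hU W U' hg hU'.
  apply: (IH1 (lp_seq W0 W)); first by apply: (IH2 W) => //; exact: iso_refl.
  apply: iso_trans hU' _; apply: iso_trans (iso_seq_l _ hU) _; exact: iso_assoc.
- move=> q r r' s s' U V W0 hr _ Fr hs _ Fs hU W U' hg hU'.
  apply: step_good hg hU'; right; exists r, s; split=> //.
  exists V, W0; split=> //; [by exists r'|by exists s'].
Qed.

Lemma seq_case : expressible (L p).
Proof.
have [i0 [hi0 Ei0]] := In_nth_ex p (Hin (dep_refl p)).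
apply: expr_ext (kleene n labS_expr outS_expr i0) => U; split.
- by move/run_sound; rewrite Ei0.
- case=> q' [Fq h].
  have G1 : Good q' (lp_unit Sigma).
    split.
    + move=> Cq i hi Ei; apply: run_out; split; first by rewrite Ei.
      left; rewrite Ei; split=> //; exact: iso_refl.
    + move=> _; exists q'; split=> //; apply: tr_unit; exact: iso_refl.
  have := trace_good h G1 (iso_sym (iso_unitr U)).
  case=> + _; apply=> //; split; exact: dep_refl.
Qed.

End SeqCase.

End Auto.


Definition pb (P : Prop) : bool := if excluded_middle_informative P then true else false.
Lemma pbP (P : Prop) : pb P <-> P.
Proof. by rewrite /pb; case: excluded_middle_informative. Qed.

Lemma count_lt (T : Type) (a b : pred T) (s : seq T) x :
  (forall y, a y -> b y) -> List.In x s -> b x -> ~~ a x -> count a s < count b s.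
Proof.
move=> Hab; elim: s => [|y s IH] //= [E|Hx] hb ha.
- subst y; rewrite (negPf ha) hb add0n add1n ltnS.
  elim: s {IH} => //= z s IHs; apply: leq_add => //.
  by case E: (a z) => //; rewrite (Hab _ E).
- apply: leq_ltn_trans (leq_add (_ : a y <= b y) (leqnn _)) _.
    by case E: (a y) => //; rewrite (Hab _ E).
  by rewrite ltn_add2l; exact: IH.
Qed.

Theorem mainTheorem1 (Sigma : finType) (A : PA Sigma) :
  well_nested A -> finitely_supported A ->
  forall q : pa_state A, exists e : spr Sigma,
    forall U : lposet Sigma, spr_sem e U <-> pa_lang q U.
Proof.
move=> WN FS q0; have [l0 Hl0] := FS q0.
have Hin : forall r, dep r q0 -> List.In r l0.
  move=> r h; apply: Hl0 => S DS Sq; exact: DS h.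
pose m (p : pa_state A) := count (fun y => pb (sdep y p)) l0.
suff H : forall k p, dep p q0 -> m p < k -> expressible (pa_lang p).
  have [e He] := H _ q0 (dep_refl _) (ltnSn _); by exists e.
elim=> [|k IHk] p Dp Hm //.
have IH : forall r, sdep r p -> expressible (pa_lang r).
  move=> r hr; apply: (IHk r (dep_trans hr.1 Dp)).
  have Hlt : m r < m p.
  apply: (count_lt (x := r)).
  - move=> y /pbP [h1 h2]; apply/pbP; split; first exact: dep_trans h1 hr.1.
    move=> h; apply: h2; exact: dep_trans hr.1 h.
  - apply: Hin; exact: dep_trans hr.1 Dp.
  - by apply/pbP.
  - by apply/negP => /pbP [_ []]; exact: dep_refl.
  by rewrite ltnS in Hm; exact: leq_trans Hlt Hm.
have Hinp : forall r, dep r p -> List.In r l0 by move=> r h; apply: Hin; exact: dep_trans h Dp.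
have [Pb|Pb] := classic (p = pa_bot A).
  rewrite Pb; apply: (expr_ext _ (expr_zero _)) => U; split=> [[]|h]; case: (L_bot h).
case: (WN p) => Sp; [exact: (seq_case WN Sp Pb Hinp IH)|exact: rec_case Sp Hinp IH].
Qed.
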